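(* Let $f:\mathbb{R}^n_{>0}\to\mathbb{R}^n_{>0}$ be order-preserving and homogeneous. If $\mathcal{G}(f)$ has a unique final class $C$ and $r(f^{[n]\setminus C}_0)<r(f)$, then the eigenspace $E(f)$ is nonempty and bounded in $(\mathbb{R}^n_{>0},d_H)$.
   Context: $[n]=\{1,\dots,n\}$; entrywise order. Order-preserving: $x\le y\Rightarrow f(x)\le f(y)$; homogeneous: $f(tx)=tf(x)$ for $t>0$. $d_H(x,y)=\log\max_{i,j}\frac{y_ix_j}{x_iy_j}$ on $\mathbb{R}^n_{>0}$; $E(f)$ is the set of $x\in\mathbb{R}^n_{>0}$ with $f(x)=\mu x$ for some $\mu$. $f$ extends continuously to an order-preserving homogeneous map on $\mathbb{R}^n_{\ge0}$, also denoted $f$. $P^J_0(x)_j=x_j$ for $j\in J$ and $0$ otherwise; $f^J_0=P^J_0fP^J_0$. For $g$ order-preserving homogeneous on $\mathbb{R}^n_{\ge 0}$, $r(g)=\inf_{x\in\mathbb{R}^n_{>0}}\max_i g(x)_i/x_i$ (and $r(f)$ is defined the same way). $\mathcal{G}(f)$ is the directed graph with vertices $[n]$ and an arc from $i$ to $j$ when $\lim_{t\to\infty}f(\exp(te_{\{j\}}))_i=\infty$, where $e_{\{j\}}$ is the $j$-th standard basis vector and $\exp$ is entrywise. A final class is a strongly connected component of $\mathcal{G}(f)$ with no arcs leaving it. *)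

(* Defs.v *)
From HB Require Import structures.
From mathcomp Require Import all_boot all_order all_algebra.
From mathcomp Require Import all_classical all_reals all_analysis.
Set Implicit Arguments. Unset Strict Implicit. Unset Printing Implicit Defensive.
Import Order.TTheory GRing.Theory Num.Theory.
Import numFieldNormedType.Exports.
Local Open Scope classical_set_scope.
Local Open Scope ring_scope.

Section Defs.
Variables (R : realType) (n : nat).
Notation vec := ('I_n -> R).

Definition posv (x : vec) : Prop := forall i, 0 < x i.

Definition order_preserving (f : vec -> vec) : Prop :=
  forall x y, posv x -> posv y -> (forall i, x i <= y i) -> forall i, f x i <= f y i.

Definition homogeneous (f : vec -> vec) : Prop :=
  forall (t : R) x, 0 < t -> posv x -> f (fun i => t * x i) = (fun i => t * f x i).

(* the continuous extension of f to the closed cone: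
   fext f x = lim_{e -> 0+} f (x + e 1) = inf_{e > 0} f (x + e 1) (monotone in e) *)
Definition fext (f : vec -> vec) (x : vec) : vec :=
  fun i => inf [set f (fun j => x j + e) i | e in [set e : R | 0 < e]].

Definition proj0 (J : {set 'I_n}) (x : vec) : vec :=
  fun j => if j \in J then x j else 0.

Definition fJ0 (f : vec -> vec) (J : {set 'I_n}) : vec -> vec :=
  fun x => proj0 J (fext f (proj0 J x)).

Definition cw_radius (g : vec -> vec) : R :=
  inf [set \big[Num.max/0]_(i < n) (g x i / x i) | x in posv].

Definition expvec (t : R) (j : 'I_n) : vec :=
  fun k => expR (if k == j then t else 0).

Definition arc (f : vec -> vec) (i j : 'I_n) : Prop :=
  (fun t : R => f (expvec t j) i) @ +oo --> +oo.

Definition graph_rel (f : vec -> vec) : rel 'I_n :=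
  fun i j => `[< arc f i j >].

Definition scc (f : vec -> vec) (C : {set 'I_n}) : Prop :=
  C != finset.set0 /\
  (forall i j, i \in C -> j \in C -> connect (graph_rel f) i j) /\
  (forall i j, i \in C ->
     connect (graph_rel f) i j -> connect (graph_rel f) j i -> j \in C).

Definition final_class (f : vec -> vec) (C : {set 'I_n}) : Prop :=
  scc f C /\ (forall i j, i \in C -> arc f i j -> j \in C).

Definition eigset (f : vec -> vec) : set vec :=
  [set x | posv x /\ exists mu : R, f x = (fun i => mu * x i)].

Definition hilbert_dist (x y : vec) : R :=
  ln (\big[Num.max/1]_(i < n) \big[Num.max/1]_(j < n) ((y i * x j) / (x i * y j))).

End Defs.

(* Main.v *)
Require Import Defs.
From HB Require Import structures.
From mathcomp Require Import all_boot all_order all_algebra.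
From mathcomp Require Import all_classical all_reals all_analysis.
From mathcomp Require Import ring lra.
Import Order.TTheory GRing.Theory Num.Theory.
Import numFieldNormedType.Exports.
Local Open Scope classical_set_scope.
Local Open Scope ring_scope.
Set Implicit Arguments. Unset Strict Implicit. Unset Printing Implicit Defensive.

Section Gen.
Variable R : realType.

Lemma unif_big (T : finType) (P : T -> R -> Prop) :
  (forall i, exists B, forall B', B <= B' -> P i B') ->
  exists B, forall B', B <= B' -> forall i, P i B'.
Proof.
move=> H.
suff: forall s : seq T, exists B, forall B', B <= B' -> forall i, i \in s -> P i B'.
  by case/(_ (enum T)) => B HB; exists B => B' le i; apply: HB => //; rewrite mem_enum.
elim=> [|a s [B HB]]; first by exists 0.
have [Ba HBa] := H a.
exists (Num.max B Ba) => B' le i; rewrite inE => /orP [/eqP ->|iIn].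
  by apply: HBa; apply: le_trans le; rewrite le_max lexx orbT.
by apply: HB => //; apply: le_trans le; rewrite le_max lexx.
Qed.

Lemma unif_small (T : finType) (P : T -> R -> Prop) :
  (forall i, exists2 e, 0 < e & forall e', 0 < e' -> e' <= e -> P i e') ->
  exists2 e, 0 < e & forall i, P i e.
Proof.
move=> H.
suff: forall s : seq T, exists2 e, 0 < e &
    forall e', 0 < e' -> e' <= e -> forall i, i \in s -> P i e'.
  case/(_ (enum T)) => e e0 He; exists e => // i.
  by apply: He => //; rewrite mem_enum.
elim=> [|a s [e e0 He]]; first by exists 1.
have [ea ea0 Hea] := H a.
exists (Num.min e ea); first by rewrite lt_min e0 ea0.
move=> e' e'0 le i; rewrite inE => /orP [/eqP ->|iIn].
  by apply: Hea => //; apply: le_trans le _; rewrite ge_min lexx orbT.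
by apply: He => //; apply: le_trans le _; rewrite ge_min lexx.
Qed.

Lemma bmax_ge (n : nat) (F : 'I_n -> R) i : F i <= \big[Num.max/0]_(j < n) F j.
Proof. by rewrite (bigD1 i) //= le_max lexx. Qed.

Lemma bmax_le (n : nat) (F : 'I_n -> R) c x0 : x0 <= c ->
  (forall i, F i <= c) -> \big[Num.max/x0]_(j < n) F j <= c.
Proof.
move=> c0 H; elim/big_ind: _ => //.
by move=> x y hx hy; rewrite ge_max hx hy.
Qed.

Lemma bmax_ex (n : nat) (F : 'I_n -> R) a : 0 < a ->
  a <= \big[Num.max/0]_(j < n) F j -> exists i, a <= F i.
Proof.
move=> a0 H; apply/not_existsP => H'.
have : \big[Num.max/0]_(j < n) F j < a.
  elim/big_ind: _ => //.
    by move=> x y hx hy; rewrite gt_max hx hy.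
  by move=> i _; rewrite ltNge; apply/negP => /(H' i).
by rewrite ltNge H.
Qed.

Lemma argmax_ex (n : nat) (D : {set 'I_n}) (F : 'I_n -> R) k0 : k0 \in D ->
  exists2 k, k \in D & forall j, j \in D -> F j <= F k.
Proof.
move=> k0D.
case: (@arg_maxP _ _ _ k0 (fun k => k \in D) F k0D) => k kD Hk.
by exists k.
Qed.

Lemma argmin_ex (n : nat) (D : {set 'I_n}) (F : 'I_n -> R) k0 : k0 \in D ->
  exists2 k, k \in D & forall j, j \in D -> F k <= F j.
Proof.
move=> k0D.
case: (@arg_minP _ _ _ k0 (fun k => k \in D) F k0D) => k kD Hk.
by exists k.
Qed.


Lemma tarski n (G : ('I_n -> R) -> ('I_n -> R)) (L U : 'I_n -> R) :
  (forall i, L i <= U i) ->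
  (forall x y, (forall i, L i <= x i <= U i) -> (forall i, L i <= y i <= U i) ->
     (forall i, x i <= y i) -> forall i, G x i <= G y i) ->
  (forall i, L i <= G L i) -> (forall i, G U i <= U i) ->
  exists x, (forall i, L i <= x i <= U i) /\ G x = x.
Proof.
move=> LU Gm GL GU.
pose box x := forall i, L i <= x i <= U i.
have boxL : box L by move=> i; rewrite lexx LU.
have boxU : box U by move=> i; rewrite lexx LU.
pose S := [set x | box x /\ forall i, x i <= G x i].
have SL : S L by split.
pose z := fun i => sup [set x i | x in S].
have hs i : has_sup [set x i | x in S].
  split; first by exists (L i), L.
  by exists (U i) => _ [x [bx _] <-]; case/andP: (bx i).
have zub x : S x -> forall i, x i <= z i.
  by move=> Sx i; apply: sup_upper_bound (hs i) _ _; exists x.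
have zle v : (forall x, S x -> forall i, x i <= v i) -> forall i, z i <= v i.
  move=> H i; apply: ge_sup; first by exists (L i), L.
  by move=> _ [x Sx <-]; apply: H.
have bz : box z.
  move=> i; rewrite (zub L SL i) /=.
  by apply: zle => x [bx _] j; case/andP: (bx j).
have bGx x : box x -> box (G x).
  move=> bx i; apply/andP; split.
    by apply: le_trans (GL i) _; apply: Gm => // j; case/andP: (bx j).
  by apply: le_trans _ (GU i); apply: Gm => // j; case/andP: (bx j).
have zG : forall i, z i <= G z i.
  apply: zle => x [bx xG] i; apply: le_trans (xG i) _.
  by apply: Gm => //; apply: zub.
have SGz : S (G z) by split; [apply: bGx | apply: Gm => //; apply: bGx].
exists z; split => //; apply: funext => i; apply/eqP; rewrite eq_le zG andbT.
exact: zub SGz i.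
Qed.

Lemma argmin_all (n : nat) (F : 'I_n -> R) (i0 : 'I_n) :
  exists k, forall j, F k <= F j.
Proof.
case: (@arg_minP _ _ _ i0 predT F isT) => k _ Hk.
by exists k => j; apply: Hk.
Qed.

Lemma argmax_all (n : nat) (F : 'I_n -> R) (i0 : 'I_n) :
  exists k, forall j, F j <= F k.
Proof.
case: (@arg_maxP _ _ _ i0 predT F isT) => k _ Hk.
by exists k => j; apply: Hk.
Qed.

Lemma argmax_pred (n : nat) (P : pred 'I_n) (F : 'I_n -> R) (i0 : 'I_n) : P i0 ->
  exists2 k, P k & forall j, P j -> F j <= F k.
Proof.
move=> Pi0; case: (@arg_maxP _ _ _ i0 P F Pi0) => k Pk Hk.
by exists k.
Qed.

Lemma le_div_helper (c M xk yk ym : R) : 0 <= c -> c <= M -> 0 < ym -> ym <= yk -> 0 <= xk ->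
  c * (xk / yk) <= M / ym * xk.
Proof.
move=> c0 cM ym0 ymk xk0.
have yk0 : 0 < yk by apply: lt_le_trans ymk.
have h1 : xk / yk <= xk / ym by rewrite ler_wpM2l // lef_pV2 ?posrE.
rewrite mulrAC; apply: le_trans (ler_wpM2l c0 h1) _.
by rewrite -mulrA ler_wpM2r // divr_ge0 // ltW.
Qed.

Lemma le_of_sq (a b : R) : 0 <= b ->
  (forall e, 0 < e -> a <= (1 + e) * (1 + e) * b) -> a <= b.
Proof.
move=> b0 H; apply/ler_addgt0Pr => eps eps0.
pose e := Num.min 1 (eps / (3 * b + 1)).
have d0 : 0 < 3 * b + 1 by rewrite ltr_wpDl // mulr_ge0.
have e0 : 0 < e by rewrite lt_min ltr01 divr_gt0.
have e1 : e <= 1 by rewrite ge_min lexx.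
have e2 : e * (3 * b + 1) <= eps.
  by rewrite -ler_pdivlMr // ge_min lexx orbT.
apply: le_trans (H e e0) _.
nra.
Qed.

End Gen.

Section Main.
Variables (R : realType) (n : nat) (f : ('I_n -> R) -> ('I_n -> R)).
Hypothesis fpos : forall x, posv x -> posv (f x).
Notation vec := ('I_n -> R).
Hypothesis fop' : order_preserving f.
Lemma fop (x y : vec) : posv x -> posv y -> (forall i, x i <= y i) -> forall i, f x i <= f y i.
Proof. exact: fop'. Qed.
Hypothesis fhom : homogeneous f.
Lemma fhomE (t : R) (x : 'I_n -> R) : 0 < t -> posv x -> f (fun i => t * x i) = (fun i => t * f x i).
Proof. exact: fhom. Qed.

Lemma posvZ (c : R) (x : vec) : 0 < c -> posv x -> posv (fun i => c * x i).
Proof. by move=> c0 px i; rewrite mulr_gt0. Qed.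

Lemma fmonoZ (x y : vec) (c : R) : posv x -> posv y -> 0 < c ->
  (forall i, x i <= c * y i) -> forall i, f x i <= c * f y i.
Proof.
move=> px py c0 H i.
have := fop px (posvZ c0 py) H i.
by rewrite (fhomE c0 py).
Qed.

Lemma arc_step (i j : 'I_n) (lam B : R) : 0 <= lam -> Defs.arc f i j -> exists B', forall x : vec, posv x -> forall a,
  (forall k, x a <= x k) -> f x i <= lam * x i -> x i <= B * x a -> x j <= B' * x a.
Proof.
move=> lam0 /cvgryPgt /(_ (lam * B)) [M [Mr HM]].
exists (expR M) => x px a amin fxi xiB.
rewrite leNgt; apply/negP => ltj.
have xa0 := px a.
pose t := ln (x j / x a).
have tM : M < t.
  by rewrite /t -ltr_expR lnK ?posrE ?divr_gt0 // ltr_pdivlMr.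
have le1 : forall k, x a * expvec t j k <= x k.
  move=> k; rewrite /expvec; case: eqP => [->|_].
    by rewrite /t lnK ?posrE ?divr_gt0 // mulrC divfK ?gt_eqF.
  by rewrite expR0 mulr1.
have pe : posv (expvec t j) by move=> k; exact: expR_gt0.
have := fop (posvZ xa0 pe) px le1 i.
rewrite (fhomE xa0 pe) => H.
have H2 : x a * (lam * B) < x a * f (expvec t j) i by rewrite ltr_pM2l // HM.
have : lam * x i <= x a * (lam * B).
  by rewrite mulrCA ler_wpM2l // mulrC.
by move=> H3; have := lt_le_trans H2 (le_trans H (le_trans fxi H3)); rewrite ltxx.
Qed.


Definition Pbound (lam : R) (a j : 'I_n) (B : R) := forall x : vec, posv x ->
  (forall k, x a <= x k) -> (forall i, f x i <= lam * x i) -> x j <= B * x a.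

Lemma path_prop lam a : 0 <= lam -> forall p b, (exists B, Pbound lam a b B) ->
  path (graph_rel f) b p -> exists B, Pbound lam a (last b p) B.
Proof.
move=> lam0; elim=> [|c p IH] b [B HB] //=; first by move=> _; exists B.
case/andP => /asboolP bc pc; apply: IH pc.
have [B' HB'] := arc_step B lam0 bc.
exists B' => x px amin fle; apply: HB' => //; last by apply: HB.
Qed.

Lemma conn_prop lam a j : 0 <= lam -> connect (graph_rel f) a j ->
  exists B, Pbound lam a j B.
Proof.
move=> lam0 /connectP [p pp ->]; apply: path_prop => //.
by exists 1 => x _ _ _; rewrite mul1r.
Qed.

Lemma reach_final (C : {set 'I_n}) : final_class f C ->
  (forall D : {set 'I_n}, final_class f D -> D = C) ->
  forall a, exists2 c, c \in C & connect (graph_rel f) a c.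
Proof.
move=> hC huniq a.
have [//|H] := pselect (exists2 c, c \in C & connect (graph_rel f) a c); exfalso.
pose r := graph_rel f.
pose D := finset (fun j => connect r a j).
have aD : a \in D by rewrite /D inE connect0.
pose reach b := finset (fun k => connect r b k).
case: (arg_minnP (fun b => #|reach b|) aD) => b bD bmin.
have Dfin : final_class f (reach b).
  have sub (i : 'I_n) : i \in reach b -> reach i \subset reach b.
    rewrite /reach inE => bi; apply/fintype.subsetP => k; rewrite !inE => ik.
    exact: connect_trans bi ik.
  have eqr (i : 'I_n) : i \in reach b -> reach i = reach b.
    move=> ib; apply/eqP; rewrite eqEcard sub //= bmin //.
    have bD' : b \in D := bD.
    move: bD' ib; rewrite /D /reach !inE => ab bi.
    have iD : i \in D by rewrite /D inE; exact: connect_trans ab bi.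
    exact: iD.
  split; first split.
  - by apply/set0Pn; exists b; rewrite /reach inE connect0.
  - split.
      move=> i j ib jb; move: (jb); rewrite -(eqr i ib) /reach inE //.
    move=> i j ib ij _; move: ib; rewrite /reach !inE => bi; exact: connect_trans bi ij.
  move=> i j ib ij; move: ib; rewrite /reach !inE => bi; apply: connect_trans bi _.
  by apply: connect1; apply/asboolP.
have := huniq _ Dfin => eqC.
apply: H; exists b; first by rewrite -eqC /reach inE connect0.
have bD' : b \in D := bD.
by move: bD'; rewrite /D inE.
Qed.


Variable C : {set 'I_n}.
Hypothesis hC : final_class f C.
Hypothesis huniq : forall D : {set 'I_n}, final_class f D -> D = C.

Lemma step2 lam : 0 <= lam -> exists2 K, 0 < K & forall x : vec, posv x ->
  (forall i, f x i <= lam * x i) -> forall a, (forall k, x a <= x k) ->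
  forall j, j \in C -> x j <= K * x a.
Proof.
move=> lam0.
pose P (p : 'I_n * 'I_n) B := p.2 \in C -> Pbound lam p.1 p.2 B.
have : exists B, forall B', B <= B' -> forall p, P p B'.
  apply: unif_big => -[a j].
  case: (boolP (j \in C)) => jC; last by exists 0 => B' _; rewrite /P /= (negbTE jC).
  have [c cC ac] := reach_final hC huniq a.
  have cj : connect (graph_rel f) c j by case: hC => -[_ [H _]] _; apply: H.
  have [B HB] := conn_prop lam0 (connect_trans ac cj).
  exists B => B' le _ x px amin fle /=; apply: le_trans (HB x px amin fle) _.
  by rewrite ler_wpM2r // ltW.
case=> B HB; exists (Num.max B 1); first by rewrite lt_max ltr01 orbT.
move=> x px fle a amin j jC.
have leB : B <= Num.max B 1 by rewrite le_max lexx.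
exact: (HB _ leB (a, j) jC x px amin fle).
Qed.

Definition rho := cw_radius f.

Lemma cw_ge0 (g : vec -> vec) : 0 <= cw_radius g.
Proof.
apply: lb_le_inf; first by exists (\big[Num.max/0]_(i < n) (g (fun=> 1) i / 1)), (fun=> 1) => // i; exact: ltr01.
move=> _ [x _ <-]; elim/big_rec: _ => // i v _ hv.
by rewrite le_max hv orbT.
Qed.

Lemma rho_le (x : vec) : posv x -> rho <= \big[Num.max/0]_(i < n) (f x i / x i).
Proof.
move=> px; apply: ge_inf; last by exists x.
exists 0 => _ [z _ <-]; elim/big_rec: _ => // i v _ hv.
by rewrite le_max hv orbT.
Qed.

Hypothesis hr : cw_radius (fJ0 f (~: C)) < rho.

Lemma rho_gt0 : 0 < rho.
Proof. exact: le_lt_trans (cw_ge0 _) hr. Qed.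

Lemma step1 : exists rho2, exists y : vec, exists eta,
  [/\ rho2 < rho, 0 < rho2, posv y, 0 < eta &
  forall (t : R) (x : vec), 0 < t -> posv x -> (forall j, j \in C -> x j <= eta * t) ->
    (forall j, j \notin C -> x j <= t * y j) ->
    forall j, j \notin C -> f x j < rho2 * (t * y j)].
Proof.
pose g := fJ0 f (~: C).
pose rho2 := (cw_radius g + rho) / 2.
have r2lt : rho2 < rho by rewrite /rho2 ltr_pdivrMr // mulrDr mulr1 ltrD2r.
have r2gt : cw_radius g < rho2 by rewrite /rho2 ltr_pdivlMr // mulrDr mulr1 ltrD2l.
have r2pos : 0 < rho2 := le_lt_trans (cw_ge0 _) r2gt.
have := r2gt; rewrite {1}/cw_radius => /inf_lt [].
  by exists (\big[Num.max/0]_(i < n) (g (fun=> 1) i / 1)), (fun=> 1) => // i; exact: ltr01.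
move=> _ [y py <-] ylt.
pose z := proj0 (~: C) y.
have z0 : forall k, 0 <= z k by move=> k; rewrite /z /proj0; case: ifP => // _; exact: ltW.
have pze e : 0 < e -> posv (fun k => z k + e) by move=> e0 k; exact: ltr_wpDl.
have : exists2 eta, 0 < eta & forall j, j \notin C -> f (fun k => z k + eta) j < rho2 * y j.
  apply: unif_small => j.
  case: (boolP (j \in C)) => jC; first by exists 1 => // e' _ _; rewrite jC.
  have gj : g y j < rho2 * y j.
    rewrite -ltr_pdivrMr //; apply: le_lt_trans ylt; exact: bmax_ge.
  move: gj; rewrite /g /fJ0 /proj0 inE jC /fext => /inf_lt [].
    by exists (f (fun k => z k + 1) j), 1 => //; exact: ltr01.
  move=> _ [e e0 <-] fe; exists e => // e' e'0 e'e _.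
  apply: le_lt_trans fe; apply: fop; try exact: pze.
  by move=> k; rewrite lerD2l.
case=> eta eta0 Heta.
exists rho2, y, eta; split => // t x t0 px xC xN j jN.
have pze' := pze _ eta0.
have le : forall k, x k <= t * (z k + eta).
  move=> k; rewrite /z /proj0 inE; case: ifP => kC.
    by apply: le_trans (xN k kC) _; rewrite ler_wpM2l ?(ltW t0) // lerDl ltW.
  by rewrite add0r mulrC; apply: xC; move/negbFE: kC.
apply: le_lt_trans (fmonoZ px pze' t0 le j) _.
by rewrite mulrCA ltr_pM2l // Heta.
Qed.


Lemma some_idx : exists i : 'I_n, i \in C.
Proof. by case: hC => -[/set0Pn [i iC] _] _; exists i. Qed.

Lemma ratio_ge (x : vec) : posv x -> exists i, rho * x i <= f x i.
Proof.
move=> px; have [i H] := bmax_ex rho_gt0 (rho_le px).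
by exists i; rewrite -ler_pdivlMr.
Qed.

Lemma ratio_le (x : vec) : posv x -> exists i, f x i <= rho * x i.
Proof.
move=> px; apply/not_existsP => H.
have H' : forall i, rho * x i < f x i by move=> i; rewrite ltNge; apply/negP/H.
have [e e0 He] : exists2 e, 0 < e & forall i, (rho + e) * x i <= f x i.
  apply: unif_small => i; exists ((f x i - rho * x i) / x i).
    by rewrite divr_gt0 // subr_gt0.
  move=> e' _ le; rewrite mulrDl -lerBrDl -ler_pdivlMr //.
have : rho + e <= rho.
  apply: lb_le_inf; first by exists (\big[Num.max/0]_(i < n) (f x i / x i)), x.
  move=> _ [z pz <-].
  have [i0 _] := some_idx.
  have [k kmin] := argmin_all (fun j => z j / x j) i0.
  pose t := z k / x k.
  have t0 : 0 < t by rewrite divr_gt0.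
  have le : forall j, t * x j <= z j.
    by move=> j; rewrite mulrC -ler_pdivlMl // mulrC; apply: kmin.
  have := fop (posvZ t0 px) pz le k; rewrite (fhomE t0 px) => fk.
  apply: le_trans (bmax_ge _ k); rewrite ler_pdivlMr //.
  apply: le_trans fk; rewrite /t.
  rewrite -[z k in leLHS](divfK (lt0r_neq0 (px k))) mulrCA ler_wpM2l ?He //.
  by rewrite divr_ge0 // ltW.
by rewrite gerDl leNgt e0.
Qed.

Lemma eig_val (x : vec) mu : posv x -> f x = (fun i => mu * x i) -> mu = rho.
Proof.
move=> px fx; apply/eqP; rewrite eq_le.
have [i Hi] := ratio_le px; have [j Hj] := ratio_ge px.
move: Hi Hj; rewrite fx => Hi Hj.
by rewrite -(ler_pM2r (px i)) Hi -(ler_pM2r (px j)) Hj.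
Qed.


Lemma shape A : 1 <= A -> exists rho2, [/\ rho2 < rho, 0 < rho2 &
  exists2 th, 0 < th & exists2 K, 0 < K & forall x : vec, posv x ->
  (forall i, f x i <= rho * A * x i) ->
  (forall k, f x k < rho2 * x k -> exists j, x k < th * x j) ->
  forall i j, x i <= K * x j].
Proof.
move=> A1.
have [rho2 [y [eta [r2lt r2pos py eta0 S1]]]] := step1.
have lam0 : 0 <= rho * A by rewrite mulr_ge0 ?(ltW _) ?rho_gt0 // (lt_le_trans ltr01 A1).
have [K K0 S2] := step2 lam0.
have [i0 _] := some_idx.
have [ka kamax] := argmax_all y i0.
have [kb kbmin] := argmin_all y i0.
pose M := Num.max (y ka) eta.
have M0 : 0 < M by rewrite lt_max eta0 orbT.
pose cy := M / y kb.
have cy0 : 0 < cy by rewrite divr_gt0.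
pose K2 := K * Num.max 1 (y ka / eta).
have mx1 : 1 <= Num.max 1 (y ka / eta) by rewrite le_max lexx.
have K20 : 0 < K2 by rewrite mulr_gt0 // (lt_le_trans ltr01 mx1).
exists rho2; split => //; exists cy^-1; first by rewrite invr_gt0.
exists K2 => // x px fle hyp.
have [a amin] := argmin_all x i0.
suff H : forall i, x i <= K2 * x a.
  by move=> i j; apply: le_trans (H i) _; rewrite ler_wpM2l // ltW.
have xC : forall j, j \in C -> x j <= K * x a := S2 x px fle a amin.
have xCK j : j \in C -> x j <= K2 * x a.
  move=> jC; apply: le_trans (xC j jC) _; rewrite /K2 -mulrA ler_wpM2l ?(ltW K0) //.
  by rewrite ler_peMl // ltW.
case: (pickP (fun k => k \notin C)) => [k0 k0N | Nemp]; last first.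
  by move=> i; apply: xCK; move: (Nemp i) => /= /negbFE.
have [k kN kmax] := argmax_pred (P := fun k => k \notin C) (fun j => x j / y j) k0N.
pose t := x k / y k.
have t0 : 0 < t by rewrite divr_gt0.
have xN : forall j, j \notin C -> x j <= t * y j.
  by move=> j jN; rewrite -ler_pdivrMr //; apply: kmax.
have tyk : t * y k = x k by rewrite /t divfK // lt0r_neq0.
case: (pselect (exists2 c, c \in C & eta * t < x c)) => [[c cC ct] | Hno].
  have tle : t <= K * x a / eta.
    rewrite ler_pdivlMr // mulrC; apply: le_trans (ltW ct) _; exact: xC.
  move=> i; case: (boolP (i \in C)) => iC; first exact: xCK.
  apply: le_trans (xN i iC) _.
  apply: le_trans (_ : t * y ka <= _).
    by rewrite ler_wpM2l // ltW.
  apply: le_trans (_ : K * x a / eta * y ka <= _).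
    by rewrite ler_wpM2r // ltW.
  rewrite /K2 (_ : K * x a / eta * y ka = K * (y ka / eta) * x a); last by ring.
  rewrite ler_wpM2r ?(ltW (px a)) // ler_wpM2l ?(ltW K0) //.
  by rewrite le_max lexx orbT.
exfalso.
have xC' : forall j, j \in C -> x j <= eta * t.
  by move=> j jC; rewrite leNgt; apply/negP => lt; apply: Hno; exists j.
have := S1 t x t0 px xC' xN k kN; rewrite tyk => /hyp [j Hj].
have : x j <= cy * x k.
  case: (boolP (j \in C)) => jC.
    apply: le_trans (xC' j jC) _; apply: le_div_helper.
    - exact: ltW.
    - by rewrite le_max lexx orbT.
    - by [].
    - by [].
    - exact: ltW.
  apply: le_trans (xN j jC) _; rewrite mulrC; apply: le_div_helper.
  - exact: ltW.
  - by rewrite le_max kamax.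
  - by [].
  - by [].
  - exact: ltW.
move=> xj; have ci : 0 <= cy^-1 by rewrite invr_ge0 ltW.
have := lt_le_trans Hj (ler_wpM2l ci xj).
by rewrite mulrA mulVf ?lt0r_neq0 // mul1r ltxx.
Qed.


Lemma one_pos : posv (fun _ : 'I_n => (1 : R)).
Proof. by move=> i; exact: ltr01. Qed.

Lemma approx : exists2 K, 0 < K & forall beta, 1 < beta -> exists x : vec,
  [/\ posv x, forall i, K^-1 <= x i <= K, forall i, rho / beta * x i <= f x i &
      forall i, f x i <= rho * beta * x i].
Proof.
have r0 := rho_gt0.
pose d i := ln (f (fun=> 1) i) - ln rho.
have [c0' Hc0] : exists B, forall B', B <= B' -> forall i, `|d i| <= B'.
  by apply: unif_big => i; exists `|d i| => B' le.
pose c0 := Num.max c0' 1.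
have c00 : 0 < c0 by rewrite lt_max ltr01 orbT.
have dc i : `|d i| <= c0 by apply: Hc0; rewrite le_max lexx.
pose A := expR c0.
have A1 : 1 <= A by rewrite -expR0 ler_expR ltW.
have [rho2 [r2lt r2pos [th th0 [K K0 Hsh]]]] := shape A1.
exists K => // beta beta1.
pose tau := rho2 / rho.
have lntau : ln tau < 0 by rewrite ln_lt0 // divr_gt0 //= ltr_pdivrMr // mul1r.
have lnb : 0 < ln beta by rewrite ln_gt0.
pose kap := Num.min 1 (Num.min (ln beta / (`|ln K| + 1)) (- ln tau / (`|ln th| + 1))).
have d1 : 0 < `|ln K| + 1 by rewrite ltr_wpDl.
have d2 : 0 < `|ln th| + 1 by rewrite ltr_wpDl.
have kap0 : 0 < kap.
  by rewrite !lt_min ltr01 divr_gt0 //= divr_gt0 // oppr_gt0.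
have kapK : kap * `|ln K| <= ln beta.
  apply: le_trans (_ : ln beta / (`|ln K| + 1) * `|ln K| <= _).
    by rewrite ler_wpM2r // !ge_min lexx orbT.
  by rewrite mulrAC ler_pdivrMr // ler_wpM2l ?(ltW lnb) // lerDl.
have kapth : kap * `|ln th| <= - ln tau.
  apply: le_trans (_ : - ln tau / (`|ln th| + 1) * `|ln th| <= _).
    by rewrite ler_wpM2r // !ge_min lexx !orbT.
  by rewrite mulrAC ler_pdivrMr // ler_wpM2l ?oppr_ge0 ?(ltW lntau) // lerDl.
pose Rb := c0 / kap.
have Rb0 : 0 < Rb by rewrite divr_gt0.
pose E (y : vec) : vec := fun i => expR (y i).
have pE y : posv (E y) by move=> i; exact: expR_gt0.
pose G (y : vec) : vec := fun i => (ln (f (E y) i) - ln rho) / (1 + kap).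
have k1 : 0 < 1 + kap by rewrite addr_gt0.
have fEc c i : ln (f (E (fun=> c)) i) = c + ln (f (fun=> 1) i).
  have -> : E (fun=> c) = (fun i => expR c * (fun _ : 'I_n => 1) i).
    by apply: funext => j; rewrite /E mulr1.
  by rewrite (fhomE (expR_gt0 c) one_pos) lnM ?posrE ?expR_gt0 ?(fpos one_pos) // expRK.
have [y [yb Gy]] : exists y, (forall i, - Rb <= y i <= Rb) /\ G y = y.
  apply: (tarski (L := fun=> - Rb) (U := fun=> Rb)).
  - by move=> j; rewrite -subr_ge0 opprK addr_ge0 // ltW.
  - move=> u v _ _ uv k; rewrite /G ler_pM2r ?invr_gt0 // lerD2r.
    rewrite ler_ln ?posrE ?fpos //; apply: fop => // j.
    by rewrite /E ler_expR.
  - move=> j; rewrite /G fEc ler_pdivlMr // -/(d j) -addrA.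
    have := dc j; rewrite ler_norml => /andP [dl _].
    rewrite mulrDr mulr1 mulNr lerD2l /Rb mulrC.
    by rewrite (mulrC kap) divfK ?lt0r_neq0.
  - move=> j; rewrite /G fEc ler_pdivrMr // -/(d j) -addrA.
    have := dc j; rewrite ler_norml => /andP [_ dr].
    rewrite mulrDr mulr1 lerD2l /Rb.
    by rewrite divfK ?lt0r_neq0.
pose x := E y.
have px : posv x := pE y.
have fx i : f x i = rho * x i * expR (kap * y i).
  have h := f_equal (fun g => g i) Gy; rewrite /G /= in h.
  have e : ln (f x i) = ln rho + y i + kap * y i.
    rewrite -h; field; exact: lt0r_neq0.
  by rewrite -[f x i]lnK ?posrE ?fpos // e !expRD lnK ?posrE.
have kyb i : `|kap * y i| <= c0.
  have := yb i; rewrite -ler_norml => h.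
  rewrite normrM (gtr0_norm kap0).
  apply: le_trans (ler_wpM2l (ltW kap0) h) _; rewrite /Rb mulrC divfK ?lt0r_neq0 //.
have fle i : f x i <= rho * A * x i.
  rewrite fx [rho * A * _]mulrAC ler_wpM2l ?mulr_ge0 ?(ltW r0) ?(ltW (px i)) //.
  by rewrite /A ler_expR; have := kyb i; rewrite ler_norml => /andP [].
have [i1 xi1] : exists i, 1 <= x i.
  have [i Hi] := ratio_ge px; exists i; move: Hi.
  rewrite fx ler_pMr ?mulr_gt0 // -expR0 ler_expR pmulr_rge0 // => yi.
  by rewrite /x /E ler_expR.
have [i2 xi2] : exists i, x i <= 1.
  have [i Hi] := ratio_le px; exists i; move: Hi.
  rewrite fx ger_pMr ?mulr_gt0 // -expR0 ler_expR pmulr_rle0 // => yi.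
  by rewrite /x /E ler_expR.
have hyp k : f x k < rho2 * x k -> exists j, x k < th * x j.
  move=> H.
  have ht : expR (kap * y k) < tau.
    by rewrite /tau ltr_pdivlMr // mulrC; move: H; rewrite fx mulrAC ltr_pM2r.
  rewrite -[tau]lnK ?posrE ?divr_gt0 // ltr_expR in ht.
  exists i1; apply: lt_le_trans (_ : th <= _); last by rewrite ler_peMr // ltW.
  rewrite /x /E -[th]lnK ?posrE // ltr_expR.
  have : kap * y k < kap * ln th.
    apply: lt_le_trans ht _.
    apply: le_trans (_ : ln tau <= - (kap * `|ln th|)) _; first by rewrite lerNr.
    by rewrite -mulrN ler_wpM2l ?(ltW kap0) // lerNl -normrN ler_norm.
  by rewrite ltr_pM2l.
have sh := Hsh x px fle hyp.
have xb i : K^-1 <= x i <= K.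
  apply/andP; split.
    by rewrite -(ler_pM2l K0) mulfV ?lt0r_neq0 //; apply: le_trans xi1 (sh i1 i).
  apply: le_trans (sh i i2) _.
  by apply: ler_piMr => //; exact: ltW.
have kb i : `|kap * y i| <= ln beta.
  apply: le_trans kapK; rewrite normrM (gtr0_norm kap0) ler_wpM2l ?(ltW kap0) //.
  have := xb i; rewrite /x /E => /andP [l u].
  rewrite ler_norml; apply/andP; split.
    rewrite lerNl; apply: le_trans (ler_norm _).
    rewrite -ler_expR lnK ?posrE // expRN -[K in _ <= K](invrK K).
    by rewrite lef_pV2 ?posrE ?invr_gt0 ?expR_gt0.
  by apply: le_trans (ler_norm _); rewrite -ler_expR lnK ?posrE.
have b0 : 0 < beta := lt_trans ltr01 beta1.
exists x; split => // i; have := kb i; rewrite ler_norml => /andP [l u].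
  rewrite fx mulrAC ler_wpM2l ?mulr_ge0 ?(ltW r0) ?(ltW (px i)) //.
  by rewrite -[beta]lnK ?posrE // -expRN ler_expR.
rewrite fx [rho * beta * _]mulrAC ler_wpM2l ?mulr_ge0 ?(ltW r0) ?(ltW (px i)) //.
by rewrite -[beta]lnK ?posrE // ler_expR.
Qed.


Lemma sub_eig : exists X : vec, [/\ posv X, exists B, forall i, X i <= B &
  forall i, rho * X i <= f X i].
Proof.
have r0 := rho_gt0.
have [K K0 HK] := approx.
have Ki0 : 0 < K^-1 by rewrite invr_gt0.
pose S b := [set x : vec | [/\ posv x, forall i, x i <= K & forall i, rho / b * x i <= f x i]].
pose Xb b i := sup [set x i | x in S b].
have Sne b : 1 < b -> exists2 x, S b x & forall i, K^-1 <= x i.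
  move=> b1; have [x [px xb fl _]] := HK b b1.
  exists x; last by move=> i; case/andP: (xb i).
  by split => // i; case/andP: (xb i).
have hs b i : 1 < b -> has_sup [set x i | x in S b].
  move=> b1; have [x Sx _] := Sne b b1; split; first by exists (x i), x.
  by exists K => _ [z [_ zK _] <-].
have Xub b x i : 1 < b -> S b x -> x i <= Xb b i.
  by move=> b1 Sx; apply: sup_upper_bound (hs b i b1) _ _; exists x.
have Xlb b i : 1 < b -> K^-1 <= Xb b i.
  move=> b1; have [x Sx xl] := Sne b b1; exact: le_trans (xl i) (Xub b x i b1 Sx).
have pX b : 1 < b -> posv (Xb b) by move=> b1 i; exact: lt_le_trans Ki0 (Xlb b i b1).
have Xsub b i : 1 < b -> rho / b * Xb b i <= f (Xb b) i.
  move=> b1; have b0 : 0 < b := lt_trans ltr01 b1.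
  have rb0 : 0 < rho / b by rewrite divr_gt0.
  rewrite mulrC -ler_pdivlMr //; apply: ge_sup; first by have [x Sx _] := Sne b b1; exists (x i), x.
  move=> _ [x [px xK fl] <-]; rewrite ler_pdivlMr // mulrC.
  apply: le_trans (fl i) _; apply: (fop px (pX b b1)) => j; exact: Xub.
have Xmono b b' i : 1 < b -> b <= b' -> Xb b i <= Xb b' i.
  move=> b1 bb'; have b1' : 1 < b' := lt_le_trans b1 bb'.
  apply: ge_sup; first by have [x Sx _] := Sne b b1; exists (x i), x.
  move=> _ [x [px xK fl] <-]; apply: Xub => //; split => // j.
  apply: le_trans (fl j); rewrite ler_wpM2r ?(ltW (px j)) // ler_pdivrMr ?(lt_trans ltr01 b1') //.
  by rewrite mulrAC ler_pdivlMr ?(lt_trans ltr01 b1) // ler_wpM2l // ltW.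
pose X i := inf [set Xb b i | b in [set b | 1 < b]].
have two1 : (1 : R) < 2 by rewrite ltr1n.
have Xne i : [set Xb b i | b in [set b | 1 < b]] !=set0 by exists (Xb 2 i), 2.
have Xlb' i : K^-1 <= X i by apply: lb_le_inf => // _ [b b1 <-]; exact: Xlb.
have XleXb b i : 1 < b -> X i <= Xb b i.
  move=> b1; apply: ge_inf; last by exists b.
  by exists K^-1 => _ [b' b1' <-]; exact: Xlb.
have pXX : posv X by move=> i; exact: lt_le_trans Ki0 (Xlb' i).
exists X; split => //.
  exists K => i; apply: le_trans (XleXb 2 i two1) _; apply: ge_sup.
    by have [x Sx _] := Sne 2 two1; exists (x i), x.
  by move=> _ [x [_ xK _] <-].
move=> i; apply: le_of_sq; first exact: ltW (fpos pXX i).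
move=> e e0.
have e10 : 0 < 1 + e by rewrite ltr_wpDl.
have [d d0 Hd] : exists2 d, 0 < d & forall j, Xb (1 + d) j <= (1 + e) * X j /\ d <= e.
  apply: unif_small => j.
  have : X j < (1 + e) * X j by rewrite ltr_pMl ?pXX // ltrDl.
  case/inf_lt => [//|_ [b b1 <-] lt].
  exists (Num.min (b - 1) e); first by rewrite lt_min subr_gt0 b1 e0.
  move=> e' e'0 le; split; last by apply: le_trans le _; rewrite ge_min lexx orbT.
  apply: le_trans (ltW lt); apply: Xmono; first by rewrite ltrDl.
  by rewrite -lerBrDl; apply: le_trans le _; rewrite ge_min lexx.
pose b := 1 + d.
have b1 : 1 < b by rewrite ltrDl.
have b0 : 0 < b := lt_trans ltr01 b1.
have Xbb j : Xb b j <= (1 + e) * X j by case: (Hd j).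
have fb := fmonoZ (pX b b1) pXX e10 Xbb i.
have xs := Xsub b i b1.
have fX0 : 0 <= f X i := ltW (fpos pXX i).
apply: le_trans (_ : rho * Xb b i <= _); first by rewrite ler_wpM2l ?(ltW r0) // XleXb.
apply: le_trans (_ : b * f (Xb b) i <= _).
  rewrite -ler_pdivrMl //.
  by rewrite mulrA (mulrC b^-1); exact: xs.
apply: le_trans (_ : b * ((1 + e) * f X i) <= _); first by rewrite ler_wpM2l ?(ltW b0).
rewrite mulrA ler_wpM2r // ler_wpM2r ?(ltW e10) // lerD2l.
by case: (Hd i).
Qed.


Lemma super_eig : exists Y : vec, [/\ posv Y, exists2 B, 0 < B & (forall i, B <= Y i) &
  forall i, f Y i <= rho * Y i].
Proof.
have r0 := rho_gt0.
have [K K0 HK] := approx.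
have Ki0 : 0 < K^-1 by rewrite invr_gt0.
pose T b := [set x : vec | [/\ posv x, forall i, K^-1 <= x i & forall i, f x i <= rho * b * x i]].
pose Yb b i := inf [set x i | x in T b].
have Tne b : 1 < b -> exists2 x, T b x & forall i, x i <= K.
  move=> b1; have [x [px xb _ fu]] := HK b b1.
  exists x; last by move=> i; case/andP: (xb i).
  by split => // i; case/andP: (xb i).
have hl b i : has_lbound [set x i | x in T b].
  by exists K^-1 => _ [z [_ zK _] <-].
have Ylb b x i : T b x -> Yb b i <= x i.
  by move=> Sx; apply: ge_inf (hl b i) _ _; exists x.
have Ygt b i : 1 < b -> K^-1 <= Yb b i.
  move=> b1; apply: lb_le_inf; first by have [x Sx _] := Tne b b1; exists (x i), x.
  by move=> _ [x [_ xl _] <-].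
have YleK b i : 1 < b -> Yb b i <= K.
  by move=> b1; have [x Tx xK] := Tne b b1; exact: le_trans (Ylb b x i Tx) (xK i).
have pY b : 1 < b -> posv (Yb b) by move=> b1 i; exact: lt_le_trans Ki0 (Ygt b i b1).
have Ysup b i : 1 < b -> f (Yb b) i <= rho * b * Yb b i.
  move=> b1; have b0 : 0 < b := lt_trans ltr01 b1.
  have rb0 : 0 < rho * b by rewrite mulr_gt0.
  rewrite mulrC -ler_pdivrMr //; apply: lb_le_inf; first by have [x Sx _] := Tne b b1; exists (x i), x.
  move=> _ [x [px xl fu] <-]; rewrite ler_pdivrMr // mulrC.
  apply: le_trans (fu i); apply: (fop (pY b b1) px) => j; exact: Ylb.
have Ymono b b' i : 1 < b -> b <= b' -> Yb b' i <= Yb b i.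
  move=> b1 bb'; have b1' : 1 < b' := lt_le_trans b1 bb'.
  apply: lb_le_inf; first by have [x Sx _] := Tne b b1; exists (x i), x.
  move=> _ [x [px xl fu] <-]; apply: Ylb; split => // j.
  apply: le_trans (fu j) _; rewrite ler_wpM2r ?(ltW (px j)) // ler_wpM2l ?(ltW r0) //.
pose Y i := sup [set Yb b i | b in [set b | 1 < b]].
have two1 : (1 : R) < 2 by rewrite ltr1n.
have hs i : has_sup [set Yb b i | b in [set b | 1 < b]].
  split; first by exists (Yb 2 i), 2.
  by exists K => _ [b b1 <-]; exact: YleK.
have YbleY b i : 1 < b -> Yb b i <= Y i.
  by move=> b1; apply: sup_upper_bound (hs i) _ _; exists b.
have pYY : posv Y by move=> i; exact: lt_le_trans (pY 2 two1 i) (YbleY 2 i two1).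
exists Y; split => //.
  by exists K^-1 => // i; exact: le_trans (Ygt 2 i two1) (YbleY 2 i two1).
move=> i; apply: le_of_sq; first by rewrite mulr_ge0 // ltW // pYY.
move=> e e0.
have e10 : 0 < 1 + e by rewrite ltr_wpDl.
have [d d0 Hd] : exists2 d, 0 < d & forall j, Y j <= (1 + e) * Yb (1 + d) j /\ d <= e.
  apply: unif_small => j.
  have : Y j / (1 + e) < Y j by rewrite ltr_pdivrMr // ltr_pMr ?pYY // ltrDl.
  case/sup_gt => [|_ [b b1 <-] lt]; first by exists (Yb 2 j), 2.
  exists (Num.min (b - 1) e); first by rewrite lt_min subr_gt0 b1 e0.
  move=> e' e'0 le; split; last by apply: le_trans le _; rewrite ge_min lexx orbT.
  rewrite mulrC -ler_pdivrMr //; apply: le_trans (ltW lt) _.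
  apply: Ymono; first by rewrite ltrDl.
  by rewrite -lerBrDl; apply: le_trans le _; rewrite ge_min lexx.
pose b := 1 + d.
have b1 : 1 < b by rewrite ltrDl.
have b0 : 0 < b := lt_trans ltr01 b1.
have YY j : Y j <= (1 + e) * Yb b j by case: (Hd j).
have fb := fmonoZ pYY (pY b b1) e10 YY i.
apply: le_trans fb _.
apply: le_trans (_ : (1 + e) * (rho * b * Yb b i) <= _).
  by rewrite ler_wpM2l ?(ltW e10) // Ysup.
apply: le_trans (_ : (1 + e) * (rho * b * Y i) <= _).
  by rewrite ler_wpM2l ?(ltW e10) // ler_wpM2l ?mulr_ge0 ?(ltW r0) ?(ltW b0) // YbleY.
have bl : b <= 1 + e by rewrite lerD2l; case: (Hd i).
rewrite -[(1 + e) * (1 + e) * _]mulrA ler_wpM2l ?(ltW e10) // (mulrC rho b) -mulrA ler_wpM2r //.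
by rewrite mulr_ge0 ?(ltW r0) ?(ltW (pYY i)).
Qed.


Lemma exists_eig : exists z : vec, posv z /\ f z = (fun i => rho * z i).
Proof.
have r0 := rho_gt0.
have [X [pX [B XB] Xs]] := sub_eig.
have [Y [pY [b b0 Yb] Ys]] := super_eig.
have [i0 _] := some_idx.
have B0 : 0 < B := lt_le_trans (pX i0) (XB i0).
pose c := B / b.
have c0 : 0 < c by rewrite divr_gt0.
pose U := fun i => c * Y i.
have pU : posv U := posvZ c0 pY.
have XU i : X i <= U i.
  apply: le_trans (XB i) _; rewrite /U /c.
  apply: le_trans (_ : B / b * b <= _); first by rewrite divfK ?lt0r_neq0.
  by rewrite ler_wpM2l ?divr_ge0 ?(ltW B0) ?(ltW b0).
pose G (x : vec) : vec := fun i => f x i / rho.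
have [z [zb Gz]] : exists z, (forall i, X i <= z i <= U i) /\ G z = z.
  apply: tarski => //.
  - move=> u v ub vb uv i; rewrite /G ler_pM2r ?invr_gt0 //.
    apply: fop => // j; [exact: lt_le_trans (pX j) (proj1 (andP (ub j))) |
                         exact: lt_le_trans (pX j) (proj1 (andP (vb j)))].
  - by move=> i; rewrite /G ler_pdivlMr // mulrC.
  - move=> i; rewrite /G /U (fhomE c0 pY) ler_pdivrMr //.
    by rewrite -[c * Y i * rho]mulrA ler_wpM2l ?(ltW c0) // mulrC.
have pz : posv z by move=> i; exact: lt_le_trans (pX i) (proj1 (andP (zb i))).
exists z; split => //; apply: funext => i.
have h := f_equal (fun g => g i) Gz; rewrite /G /= in h.
by rewrite -[in RHS]h mulrC divfK // lt0r_neq0.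
Qed.

Lemma eig_shape : exists2 K, 0 < K & forall x : vec, eigset f x -> forall i j, x i <= K * x j.
Proof.
have [rho2 [r2lt r2pos [th th0 [K K0 Hsh]]]] := shape (lexx 1).
exists K => // x [px [mu fx]].
have mue := eig_val px fx; subst mu.
apply: Hsh => //.
  by move=> i; rewrite fx mulr1.
move=> k; rewrite fx ltr_pM2r // => lt.
by exfalso; move: (lt_trans lt r2lt); rewrite ltxx.
Qed.

End Main.

Lemma bigmax1_ge1 (R : realType) n (F : 'I_n -> R) : 1 <= \big[Num.max/1]_(i < n) F i.
Proof. by elim/big_rec: _ => // i v _ hv; rewrite le_max hv orbT. Qed.

Unset Implicit Arguments.

Theorem theorem3p11 (R : realType) (n : nat) (f : ('I_n -> R) -> ('I_n -> R))
  (fpos : forall x, posv x -> posv (f x))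
  (fop : order_preserving f) (fhom : homogeneous f)
  (C : {set 'I_n}) (hC : final_class f C)
  (huniq : forall D : {set 'I_n}, final_class f D -> D = C)
  (hr : cw_radius (fJ0 f (~: C)) < cw_radius f) :
  (exists x, eigset f x) /\
  (exists M : R, forall x y, eigset f x -> eigset f y -> hilbert_dist x y <= M).
Proof.
split.
  have [z [pz fz]] := exists_eig fpos fop fhom hC huniq hr.
  by exists z; split => //; exists (rho f).
have [K K0 HK] := eig_shape fop fhom hC huniq hr.
exists (ln (Num.max 1 (K * K))) => x y ex ey.
have sx := HK x ex; have sy := HK y ey.
have px : posv x by case: ex.
have py : posv y by case: ey.
rewrite /hilbert_dist ler_ln ?posrE ?(lt_le_trans ltr01 (bigmax1_ge1 _)) //; last first.
  by rewrite lt_max ltr01.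
apply: bmax_le; first by rewrite le_max lexx.
move=> i; apply: bmax_le; first by rewrite le_max lexx.
move=> j; apply: le_trans (_ : K * K <= _); last by rewrite le_max lexx orbT.
rewrite ler_pdivrMr ?mulr_gt0 //.
rewrite (mulrC (x i)) mulrACA.
apply: ler_pM; [exact: ltW | exact: ltW | exact: sy | exact: sx].
Qed.
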